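(* Let $\alpha\in\ell^2$, let $I$ be a finite interval in $\mathbb{N}$ with endpoints $a\le b$, and let $\epsilon>0$. Suppose that the set $S(\epsilon)=\{k\in\mathbb{N}: Z_k\subseteq I,\ \sigma_k>\epsilon\}$ has at least $4$ distinct elements. Then $J(I)>\epsilon/2$ and $L(I)>\epsilon/(2\sqrt2)$.
   Context: $\mathbb{N}=\{0,1,2,\dots\}$; $Z_k=[2^k,2^{k+1}-1]\cap\mathbb{N}$; $\sigma_k=(\sum_{j=2^k}^{2^{k+1}-1}(j+1)|\alpha_j|^2)^{1/2}$. $J(I)=\inf_{c\in I}\max(A_c,B_c)$ with $A_c=\sup_{a\le s\le c}(c-s)^{1/2}(\sum_{k=a}^s|\alpha_k|^2)^{1/2}$, $B_c=\sup_{c\le s\le b}(s-c)^{1/2}(\sum_{k=s}^b|\alpha_k|^2)^{1/2}$. $L(I)=(\sup_{\|f\|_{2,I}\le1}l(I,f)/\mu(I))^{1/2}$ where $\mu(I)=\sum_{k\in I}|\alpha_k|^2$, $\|f\|_{2,I}=(\sum_{k\in I}|f(k)|^2)^{1/2}$, $l(I,f)=\sum_{k\in I}\sum_{n\in I\setminus\{k\}}|\alpha_k\alpha_n\sum_{j=\min(k,n)+1}^{\max(k,n)}f(j)|^2$ (sup over $f$ supported in $I$; $L(I)=0$ if $\alpha$ vanishes on $I$). *)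

(* Defs.v *)
From mathcomp Require Import all_boot all_order all_algebra.
From mathcomp Require Import all_classical all_reals all_analysis.
From mathcomp.real_closed Require Import complex.
Import Order.TTheory GRing.Theory Num.Theory numFieldNormedType.Exports.
Set Implicit Arguments. Unset Strict Implicit. Unset Printing Implicit Defensive.
Local Open Scope classical_set_scope.
Local Open Scope ring_scope.

Section Defs.
Variable R : realType.

Definition nrm2 (z : R[i]) : R := complex.Re z ^+ 2 + complex.Im z ^+ 2.

Definition Iset_nat (a b : nat) : set nat := [set j | (a <= j <= b)%N].

Definition Zset_nat (k : nat) : set nat := [set j | (2 ^ k <= j <= 2 ^ k.+1 - 1)%N].

Definition sigma_of (alpha : nat -> R[i]) (k : nat) : R :=
  Num.sqrt (\sum_(2 ^ k <= j < 2 ^ k.+1) (j.+1)%:R * nrm2 (alpha j)).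

Definition Seps_set (alpha : nat -> R[i]) (a b : nat) (eps : R) : set nat :=
  [set k | Zset_nat k `<=` Iset_nat a b /\ eps < sigma_of alpha k].

Definition A_of (alpha : nat -> R[i]) (a c : nat) : R :=
  sup [set Num.sqrt ((c - s)%:R) * Num.sqrt (\sum_(a <= k < s.+1) nrm2 (alpha k))
      | s in Iset_nat a c].

Definition B_of (alpha : nat -> R[i]) (b c : nat) : R :=
  sup [set Num.sqrt ((s - c)%:R) * Num.sqrt (\sum_(s <= k < b.+1) nrm2 (alpha k))
      | s in Iset_nat c b].

Definition J_of (alpha : nat -> R[i]) (a b : nat) : R :=
  inf [set Num.max (A_of alpha a c) (B_of alpha b c) | c in Iset_nat a b].

Definition mu_of (alpha : nat -> R[i]) (a b : nat) : R :=
  \sum_(a <= k < b.+1) nrm2 (alpha k).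

Definition l_of (alpha : nat -> R[i]) (a b : nat) (f : nat -> R[i]) : R :=
  \sum_(a <= k < b.+1) \sum_(a <= n < b.+1 | n != k)
     nrm2 (alpha k * alpha n * \sum_((minn k n).+1 <= j < (maxn k n).+1) f j).

Definition norm2I (a b : nat) (f : nat -> R[i]) : R :=
  Num.sqrt (\sum_(a <= k < b.+1) nrm2 (f k)).

Definition L_of (alpha : nat -> R[i]) (a b : nat) : R :=
  if mu_of alpha a b == 0 then 0 else
  Num.sqrt (sup [set l_of alpha a b f / mu_of alpha a b
                | f in [set f : nat -> R[i] |
                        (forall j, ~ Iset_nat a b j -> f j = 0) /\ norm2I a b f <= 1]]).

End Defs.

(* Main.v *)
Require Import Defs.
From mathcomp Require Import all_boot all_order all_algebra.
From mathcomp Require Import all_classical all_reals all_analysis.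
From mathcomp.real_closed Require Import complex.
From mathcomp Require Import ring lra zify.
Import Order.TTheory GRing.Theory Num.Theory numFieldNormedType.Exports.
Local Open Scope classical_set_scope.
Local Open Scope ring_scope.



Section Aux.
Variable R : realType.

Lemma nrm2_ge0 (z : R[i]) : 0 <= nrm2 z.
Proof. by rewrite /nrm2 addr_ge0 // sqr_ge0. Qed.

Lemma nrm2M (x y : R[i]) : nrm2 (x * y) = nrm2 x * nrm2 y.
Proof. case: x => a b; case: y => c d; rewrite /nrm2 /=. ring. Qed.

Lemma nrm2D (x y : R[i]) : nrm2 (x + y) <= 2 * (nrm2 x + nrm2 y).
Proof.
case: x => a b; case: y => c d; rewrite /nrm2 /=.
have h1 : 0 <= (a - c) ^+ 2 by rewrite sqr_ge0.
have h2 : 0 <= (b - d) ^+ 2 by rewrite sqr_ge0.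
nra.
Qed.

Lemma nrm2_0 : nrm2 (0 : R[i]) = 0.
Proof. by rewrite /nrm2 /= expr0n /= addr0. Qed.

Lemma nrm2C (w : R) : nrm2 (w%:C)%C = w ^+ 2.
Proof. by rewrite /nrm2 /= expr0n /= addr0. Qed.

Lemma nrm2_sum (r : seq nat) (F : nat -> R[i]) :
  nrm2 (\sum_(i <- r) F i) <= 2 ^+ size r * \sum_(i <- r) nrm2 (F i).
Proof.
elim: r => [|x r IH]; first by rewrite !big_nil nrm2_0 mulr0.
rewrite !big_cons /=.
apply: le_trans (nrm2D _ _) _.
have h0 := nrm2_ge0 (F x).
have hs : 0 <= \sum_(i <- r) nrm2 (F i) by apply: sumr_ge0 => i _; apply: nrm2_ge0.
have he : 1 <= 2 ^+ size r :> R by apply: exprn_ege1; lra.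
rewrite exprS -mulrA ler_pM2l //.
nra.
Qed.

End Aux.



Section Aux2.
Variable R : realType.

Lemma sum_sub (F : nat -> R) (hF : forall i, 0 <= F i) a p q r :
  (a <= p)%N -> (q <= r)%N -> \sum_(p <= i < q) F i <= \sum_(a <= i < r) F i.
Proof.
move=> hap hqr.
have hpos : forall m n, 0 <= \sum_(m <= i < n) F i.
  by move=> m n; apply: sumr_ge0 => i _.
case: (leqP q p) => hqp; first by rewrite big_geq.
rewrite (big_cat_nat _ (m := a) (n := p) (p := r)) //=; last by lia.
rewrite (big_cat_nat _ (n := q) (m := p) (p := r)) //=; last by lia.
have := hpos a p; have := hpos q r; lra.
Qed.

Lemma sum_ind (V : zmodType) (v : V) x y p q :
  (x <= p.+1)%N -> (p <= q)%N -> (q.+1 <= y)%N ->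
  \sum_(x <= j < y) (if (p < j <= q)%N then v else 0) = v *+ (q - p).
Proof.
move=> h1 h2 h3.
rewrite (big_cat_nat _ (n := p.+1)) //=; last by lia.
rewrite (big_cat_nat _ (n := q.+1) (m := p.+1) (p := y)) //=. all: try lia.
rewrite big1_seq; last first.
  by move=> i /andP[_]; rewrite mem_index_iota => /andP[_ hi]; rewrite ifF //; lia.
rewrite [X in _ + (_ + X)]big1_seq; last first.
  by move=> i /andP[_]; rewrite mem_index_iota => /andP[hi _]; rewrite ifF //; lia.
rewrite add0r addr0.
rewrite (eq_big_nat _ _ (F2 := fun _ => v)); last first.
  by move=> i hi; rewrite ifT //; lia.
by rewrite sumr_const_nat subSS.
Qed.

Lemma four_sorted (P : nat -> Prop) k1 k2 k3 k4 :
  uniq [:: k1; k2; k3; k4] -> P k1 -> P k2 -> P k3 -> P k4 ->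
  exists x1 x2 x3 x4, [/\ (x1 < x2)%N, (x2 < x3)%N, (x3 < x4)%N &
     [/\ P x1, P x2, P x3 & P x4]].
Proof.
move=> hu p1 p2 p3 p4.
set s := [:: k1; k2; k3; k4].
have hP : forall x, x \in sort leq s -> P x.
  move=> x; rewrite mem_sort !inE => /orP[/eqP->|/orP[/eqP->|/orP[/eqP->|/eqP->]]] //.
have hs : sorted ltn (sort leq s).
  by rewrite ltn_sorted_uniq_leq sort_uniq hu (sort_sorted leq_total).
have hsz : size (sort leq s) = 4%N by rewrite size_sort.
move: hP hs hsz.
case: (sort leq s) => [|x1 [|x2 [|x3 [|x4 [|]]]]] //= hP hs _.
move: hs => /and4P[h12 h23 h34 _].
exists x1, x2, x3, x4; split => //; split; apply: hP; rewrite !inE eqxx ?orbT //.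
Qed.

Lemma argmin_nat (g : nat -> R) a b : (a <= b)%N ->
  exists c, (a <= c <= b)%N /\ forall c', (a <= c' <= b)%N -> g c <= g c'.
Proof.
elim: b => [|b IH] hab.
  exists 0%N; split; first by lia.
  by move=> c' hc'; have -> : c' = 0%N by lia.
case: (leqP a b) => hab'.
  have [c [hc hmin]] := IH hab'.
  case: (leP (g c) (g b.+1)) => hcmp.
    exists c; split; first by lia.
    move=> c' hc'; case: (leqP c' b) => hc'b; first by apply: hmin; lia.
    by have -> : c' = b.+1 by lia.
  exists b.+1; split; first by lia.
  move=> c' hc'; case: (leqP c' b) => hc'b.
    apply: le_trans (hmin c' _); [exact: ltW | lia].
  by have -> : c' = b.+1 by lia.
exists b.+1; split; first by lia.
by move=> c' hc'; have -> : c' = b.+1 by lia.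
Qed.

Lemma median_nat (F : nat -> R) (hF : forall i, 0 <= F i) a b : (a <= b)%N ->
  exists t, [/\ (a <= t <= b)%N,
    \sum_(a <= i < b.+1) F i <= 2 * \sum_(a <= i < t.+1) F i &
    \sum_(a <= i < b.+1) F i <= 2 * \sum_(t <= i < b.+1) F i].
Proof.
move=> hab.
set mu := \sum_(a <= i < b.+1) F i.
have hmu : 0 <= mu by apply: sumr_ge0.
have hex : exists t, (a <= t)%N && (mu <= 2 * \sum_(a <= i < t.+1) F i).
  exists b; rewrite hab /= -/mu; have := hmu; lra.
case: (ex_minnP hex) => t /andP[hat ht] hmin.
have htb : (t <= b)%N.
  by apply: hmin; rewrite hab /= -/mu; have := hmu; lra.
exists t; split => //; first by lia.
case: (ltnP a t) => hat'.
  move: hat' hmin ht htb hat; case: t => [|t] //= hat' hmin ht htb hat.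
  have hn : ~~ ((a <= t)%N && (mu <= 2 * \sum_(a <= i < t.+1) F i)).
    by apply/negP => /hmin; lia.
  rewrite (_ : (a <= t)%N = true) /= in hn; last by lia.
  have hsplit : mu = \sum_(a <= i < t.+1) F i + \sum_(t.+1 <= i < b.+1) F i.
    by rewrite /mu (big_cat_nat _ (n := t.+1)) //; lia.
  move: hn; rewrite -ltNge => hn.
  lra.
have -> : t = a by lia.
have := hmu; rewrite -/mu; lra.
Qed.

End Aux2.



Section Main.
Variable R : realType.
Variable alpha : nat -> R[i].

Definition mblk (k : nat) : R := \sum_(2 ^ k <= j < 2 ^ k.+1) nrm2 (alpha j).

Lemma nrm2a_ge0 i : 0 <= nrm2 (alpha i). Proof. exact: nrm2_ge0. Qed.

Lemma lt_sqrt (e z : R) : 0 <= e -> e ^+ 2 < z -> e < Num.sqrt z.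
Proof.
move=> he hz.
have hz0 : 0 < z by apply: le_lt_trans hz; rewrite sqr_ge0.
by rewrite -[e]ger0_norm // -sqrtr_sqr ltr_sqrt.
Qed.

Lemma block_facts a b eps k : 0 < eps -> Seps_set alpha a b eps k ->
  [/\ (a <= 2 ^ k)%N, (2 ^ k.+1 <= b.+1)%N & eps ^+ 2 < (2 ^ k.+1)%:R * mblk k].
Proof.
move=> he [hZ hs].
have hP : (0 < 2 ^ k)%N by rewrite expn_gt0.
have hE : (2 ^ k.+1 = 2 * 2 ^ k)%N by rewrite expnS.
have h1 : Iset_nat a b (2 ^ k)%N.
  by apply: hZ; rewrite /Zset_nat /= leqnn /=; lia.
have h2 : Iset_nat a b (2 ^ k.+1 - 1)%N.
  by apply: hZ; rewrite /Zset_nat /= leqnn andbT; lia.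
move: h1 h2; rewrite /Iset_nat /= => h1 h2.
split; [lia | lia |].
move: hs; rewrite /sigma_of => hs.
set S := \sum_(2 ^ k <= j < 2 ^ k.+1) (j.+1)%:R * nrm2 (alpha j) in hs.
have hS0 : 0 <= S by apply: sumr_ge0 => j _; rewrite mulr_ge0 ?ler0n ?nrm2a_ge0.
have hSq := sqr_sqrtr hS0.
have h3 : eps ^+ 2 < S.
  have hq : 0 <= Num.sqrt S by apply: sqrtr_ge0.
  rewrite -hSq; nra.
apply: lt_le_trans h3 _.
rewrite /mblk mulr_sumr; apply: ler_sum_nat => j /andP[_ hj].
apply: ler_wpM2r; first exact: nrm2a_ge0.
by rewrite ler_nat.
Qed.

Lemma A_lb a c s : (a <= s <= c)%N ->
  Num.sqrt ((c - s)%:R) * Num.sqrt (\sum_(a <= k < s.+1) nrm2 (alpha k)) <= A_of alpha a c.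
Proof.
move=> hs; apply: ub_le_sup; last by exists s.
exists (Num.sqrt (c%:R) * Num.sqrt (\sum_(a <= k < c.+1) nrm2 (alpha k))).
move=> x [s' hs' <-]; move: hs'; rewrite /Iset_nat /= => hs'.
apply: ler_pM; rewrite ?sqrtr_ge0 //.
  by rewrite ler_sqrt // ?ler_nat; lia.
rewrite ler_sqrt; last by apply: sumr_ge0 => i _; apply: nrm2a_ge0.
apply: sum_sub; [exact: nrm2a_ge0 | by [] | lia].
Qed.

Lemma B_lb b c s : (c <= s <= b)%N ->
  Num.sqrt ((s - c)%:R) * Num.sqrt (\sum_(s <= k < b.+1) nrm2 (alpha k)) <= B_of alpha b c.
Proof.
move=> hs; apply: ub_le_sup; last by exists s.
exists (Num.sqrt (b%:R) * Num.sqrt (\sum_(c <= k < b.+1) nrm2 (alpha k))).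
move=> x [s' hs' <-]; move: hs'; rewrite /Iset_nat /= => hs'.
apply: ler_pM; rewrite ?sqrtr_ge0 //.
  by rewrite ler_sqrt // ?ler_nat; lia.
rewrite ler_sqrt; last by apply: sumr_ge0 => i _; apply: nrm2a_ge0.
apply: sum_sub; [exact: nrm2a_ge0 | lia | by []].
Qed.

Lemma pow_lt k k' : (k < k')%N -> (2 ^ k.+1 <= 2 ^ k')%N.
Proof. by move=> h; apply: leq_pexp2l. Qed.
Arguments pow_lt {k k'}.

Lemma J_right b eps c k k' : 0 < eps -> (k < k')%N -> (c < 2 ^ k)%N ->
  (2 ^ k'.+1 <= b.+1)%N -> eps ^+ 2 < (2 ^ k'.+1)%:R * mblk k' ->
  eps / 2 < B_of alpha b c.
Proof.
move=> he hkk hc hb hm.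
have hp := pow_lt hkk.
have hE : (2 ^ k.+1 = 2 * 2 ^ k)%N by rewrite expnS.
have hE' : (2 ^ k'.+1 = 2 * 2 ^ k')%N by rewrite expnS.
apply: lt_le_trans (B_lb _ _ (2 ^ k')%N _); last by lia.
rewrite -sqrtrM ?ler0n //; apply: lt_sqrt; first by lra.
set x := ((2 ^ k' - c)%:R : R).
set y := \sum_(2 ^ k' <= k0 < b.+1) nrm2 (alpha k0).
set N := ((2 ^ k')%:R : R).
have hx0 : 0 <= x by rewrite ler0n.
have hm0 : 0 <= mblk k' by apply: sumr_ge0 => i _; apply: nrm2a_ge0.
have hy : mblk k' <= y by apply: sum_sub => //; try exact: nrm2a_ge0; lia.
have h2x : N <= 2 * x.
  rewrite /N /x -natrM ler_nat; lia.
have hN : ((2 ^ k'.+1)%:R : R) = 2 * N by rewrite hE' natrM.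
rewrite hN in hm.
have h1 : x * mblk k' <= x * y by apply: ler_wpM2l.
have h3 : N * mblk k' <= 2 * x * mblk k' by apply: ler_wpM2r.
have -> : (eps / 2) ^+ 2 = eps ^+ 2 / 4 by field.
nra.
Qed.

Lemma J_left a eps c k k' : 0 < eps -> (k < k')%N -> (2 ^ k'.+1 <= c)%N ->
  (a <= 2 ^ k)%N -> eps ^+ 2 < (2 ^ k.+1)%:R * mblk k ->
  eps / 2 < A_of alpha a c.
Proof.
move=> he hkk hc ha hm.
have hp := pow_lt hkk.
have hP : (0 < 2 ^ k)%N by rewrite expn_gt0.
have hE : (2 ^ k.+1 = 2 * 2 ^ k)%N by rewrite expnS.
have hE' : (2 ^ k'.+1 = 2 * 2 ^ k')%N by rewrite expnS.
apply: lt_le_trans (A_lb _ _ (2 ^ k.+1 - 1)%N _); last by lia.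
rewrite -sqrtrM ?ler0n //; apply: lt_sqrt; first by lra.
set x := ((c - (2 ^ k.+1 - 1))%:R : R).
set y := \sum_(a <= k0 < (2 ^ k.+1 - 1).+1) nrm2 (alpha k0).
set N := ((2 ^ k.+1)%:R : R).
have hm0 : 0 <= mblk k by apply: sumr_ge0 => i _; apply: nrm2a_ge0.
have hy : mblk k <= y by apply: sum_sub => //; try exact: nrm2a_ge0; lia.
have hx : N <= x by rewrite /N /x ler_nat; lia.
have hN0 : 0 <= N by rewrite ler0n.
have h1 : N * mblk k <= x * y by apply: ler_pM.
have -> : (eps / 2) ^+ 2 = eps ^+ 2 / 4 by field.
have : 0 < eps ^+ 2 by rewrite exprn_gt0.
lra.
Qed.

End Main.



Arguments nrm2_sum {R} r F.
Arguments sum_sub {R F} hF {a p q r}.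
Arguments sum_ind {V} v {x y p q}.

Section L.
Variable R : realType.
Variable alpha : nat -> R[i].

Lemma addC (x y u v : R) : (Complex x y) + (Complex u v) = Complex (x + u) (y + v).
Proof. reflexivity. Qed.

Lemma complexMn (x y : R) n : (Complex x y) *+ n = Complex (x *+ n) (y *+ n).
Proof.
elim: n => [|n IH]; first by rewrite !mulr0n.
by rewrite mulrS IH addC -!mulrS.
Qed.

Lemma nrm2Mn (z : R[i]) n : nrm2 (z *+ n) = nrm2 z * (n%:R) ^+ 2.
Proof. case: z => x y; rewrite complexMn /nrm2 /= -[x *+ n]mulr_natr -[y *+ n]mulr_natr; ring. Qed.

Lemma sum_prod (F : nat -> R) (C : R) a p q r :
  \sum_(a <= k < p) \sum_(q <= n < r) (F k * F n * C) =
  (\sum_(a <= k < p) F k) * (\sum_(q <= n < r) F n) * C.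
Proof.
rewrite -mulrA big_distrl /=; apply: eq_bigr => k _.
rewrite big_distrl big_distrr /=; apply: eq_bigr => n _; by rewrite mulrA.
Qed.

Lemma l_ub a b f : norm2I a b f <= 1 ->
  l_of alpha a b f <= 2 ^+ b.+1 * mu_of alpha a b * mu_of alpha a b.
Proof.
move=> hf.
have hs : \sum_(a <= k < b.+1) nrm2 (f k) <= 1.
  have h0 : 0 <= \sum_(a <= k < b.+1) nrm2 (f k) by apply: sumr_ge0 => i _; apply: nrm2_ge0.
  by move: hf; rewrite /norm2I -{1}sqrtr1 ler_sqrt.
have hC : 0 <= 2 ^+ b.+1 :> R by apply: exprn_ge0.
apply: (@le_trans _ _ (\sum_(a <= k < b.+1) \sum_(a <= n < b.+1)
   (nrm2 (alpha k) * nrm2 (alpha n) * 2 ^+ b.+1))); last first.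
  by rewrite sum_prod /mu_of mulrC mulrA.
rewrite /l_of; apply: ler_sum_nat => k hk.
rewrite big_mkcond /=; apply: ler_sum_nat => n hn.
have hT : 0 <= nrm2 (alpha k) * nrm2 (alpha n) * 2 ^+ b.+1.
  by rewrite !mulr_ge0 ?nrm2_ge0.
case: ifP => _ //.
rewrite !nrm2M; apply: ler_wpM2l; first by rewrite mulr_ge0 ?nrm2_ge0.
apply: le_trans (nrm2_sum _ _) _.
rewrite size_iota.
have hsub : \sum_(i <- index_iota (minn k n).+1 (maxn k n).+1) nrm2 (f i) <= 1.
  apply: le_trans hs.
  by apply: sum_sub => //; [move=> i; apply: nrm2_ge0 | lia | lia].
have he : 2 ^+ ((maxn k n).+1 - (minn k n).+1) <= 2 ^+ b.+1 :> R.
  by rewrite ler_eXn2l //; [lia | lra].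
have hs0 : 0 <= \sum_(i <- index_iota (minn k n).+1 (maxn k n).+1) nrm2 (f i).
  by apply: sumr_ge0 => i _; apply: nrm2_ge0.
have he0 : 0 <= 2 ^+ ((maxn k n).+1 - (minn k n).+1) :> R by apply: exprn_ge0.
nra.
Qed.

Definition ftest (p q : nat) (j : nat) : R[i] :=
  if (p < j <= q)%N then ((Num.sqrt ((q - p)%:R))^-1)%:C%C else 0.

Lemma ftest_dom a b p q : (a <= p)%N -> (p < q)%N -> (q <= b)%N ->
  (forall j, ~ Iset_nat a b j -> ftest p q j = 0) /\ norm2I a b (ftest p q) <= 1.
Proof.
move=> hap hpq hqb; split.
  move=> j hj; rewrite /ftest; case: ifP => // h; exfalso; apply: hj.
  by rewrite /Iset_nat /=; lia.
rewrite /norm2I.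
pose w : R := (Num.sqrt ((q - p)%:R))^-1.
have -> : \sum_(a <= k < b.+1) nrm2 (ftest p q k) =
          \sum_(a <= k < b.+1) (if (p < k <= q)%N then w ^+ 2 else 0).
  apply: eq_bigr => k _; rewrite /ftest; case: ifP => _; rewrite /nrm2 /= ?expr0n /= ?addr0 //.
rewrite (sum_ind _ (x := a) (y := b.+1)); [|lia|lia|lia].
have hL : (0 : R) < (q - p)%:R by rewrite ltr0n; lia.
rewrite /w exprVn sqr_sqrtr; last exact: ltW hL.
rewrite -[((q - p)%:R)^-1 *+ _]mulr_natr mulVf ?sqrtr1 //; by rewrite gt_eqF.
Qed.

Lemma ftest_l a b p q : (a <= p)%N -> (p < q)%N -> (q <= b)%N ->
  (q - p)%:R * (\sum_(a <= k < p.+1) nrm2 (alpha k)) * (\sum_(q <= n < b.+1) nrm2 (alpha n))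
  <= l_of alpha a b (ftest p q).
Proof.
move=> hap hpq hqb.
have hL : (0 : R) < (q - p)%:R by rewrite ltr0n; lia.
rewrite [X in X <= _](_ : _ = \sum_(a <= k < p.+1) \sum_(q <= n < b.+1)
   (nrm2 (alpha k) * nrm2 (alpha n) * (q - p)%:R)); last first.
  by rewrite sum_prod; ring.
rewrite /l_of.
have hin : forall k, 0 <= \sum_(a <= n < b.+1 | n != k)
    nrm2 (alpha k * alpha n * \sum_((minn k n).+1 <= j < (maxn k n).+1) ftest p q j).
  by move=> k; apply: sumr_ge0 => i _; apply: nrm2_ge0.
apply: le_trans (sum_sub (F := fun k => \sum_(a <= n < b.+1 | n != k)
    nrm2 (alpha k * alpha n * \sum_((minn k n).+1 <= j < (maxn k n).+1) ftest p q j))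
    hin (leqnn a) (_ : (p.+1 <= b.+1)%N)); last by lia.
apply: ler_sum_nat => k hk.
rewrite [X in _ <= X]big_mkcond /=.
apply: le_trans (sum_sub (F := fun n => if n != k then
    nrm2 (alpha k * alpha n * \sum_((minn k n).+1 <= j < (maxn k n).+1) ftest p q j) else 0)
    _ (_ : (a <= q)%N) (leqnn b.+1)); last 2 first.
- by move=> i; case: ifP => _ //; apply: nrm2_ge0.
- lia.
apply: ler_sum_nat => n hn /=.
rewrite ifT; last by apply/eqP; lia.
have -> : minn k n = k by apply/minn_idPl; lia.
have -> : maxn k n = n by apply/maxn_idPr; lia.
rewrite /ftest (sum_ind _ (x := k.+1) (y := n.+1)); [|lia|lia|lia].
rewrite !nrm2M nrm2Mn nrm2C.
pose w : R := (Num.sqrt ((q - p)%:R))^-1.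
have -> : w ^+ 2 * (q - p)%:R ^+ 2 = (q - p)%:R.
  rewrite /w exprVn sqr_sqrtr; last exact: ltW hL.
  field; by rewrite gt_eqF.
by [].
Qed.

End L.





Lemma real_right (R : realType) (eps mu muL muR m N L : R) :
  0 < mu -> mu <= 2 * muL -> 0 <= muL -> 0 <= m -> m <= muR -> N <= 2 * L ->
  0 <= L -> eps ^+ 2 < 2 * N * m -> eps ^+ 2 / 8 * mu < L * muL * muR.
Proof.
move=> hmu hL hmuL hm hmR hNL hL0 he.
have P1 : L * m <= L * muR by apply: ler_wpM2l.
have P2 : N * m <= 2 * L * m by apply: ler_wpM2r.
have P3 : 0 <= (2 * muL - mu) * (L * muR).
  by apply: mulr_ge0; [lra | apply: mulr_ge0 => //; lra].
have P4 : 0 <= mu * (2 * (L * muR) - N * m).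
  by apply: mulr_ge0; lra.
have P5 : 0 < mu * (2 * N * m - eps ^+ 2).
  by apply: mulr_gt0 => //; lra.
lra.
Qed.

Lemma real_left (R : realType) (eps mu muL muR m N L : R) :
  0 < mu -> mu <= 2 * muR -> 0 <= muR -> 0 <= N -> N <= L -> 0 <= m -> m <= muL ->
  eps ^+ 2 < N * m -> 0 < eps ^+ 2 -> eps ^+ 2 / 8 * mu < L * muL * muR.
Proof.
move=> hmu hR hmuR hN hNL hm hmL he he0.
have P1 : N * m <= L * muL by apply: ler_pM.
have P3 : 0 <= (L * muL) * (2 * muR - mu).
  by apply: mulr_ge0; [apply: mulr_ge0; lra | lra].
have P5 : 0 < mu * (L * muL - eps ^+ 2).
  by apply: mulr_gt0 => //; lra.
have P6 : 0 < eps ^+ 2 * mu by apply: mulr_gt0.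
lra.
Qed.

Lemma real_mpos (R : realType) (eps m N : R) :
  0 < eps ^+ 2 -> eps ^+ 2 < N * m -> 0 <= N -> 0 <= m -> 0 < m.
Proof.
move=> h1 h2 h3 h4; rewrite lt_neqAle h4 andbT; apply/eqP => hm.
by move: h2; rewrite -hm mulr0; lra.
Qed.

Arguments real_right {R eps mu muL muR m N L}.
Arguments real_left {R eps mu muL muR m N L}.
Arguments real_mpos {R eps m N}.

Theorem lemma5p2 (R : realType) (alpha : nat -> R[i])
  (halpha : cvgn (series (fun k => nrm2 (alpha k))))
  (a b : nat) (hab : (a <= b)%N) (eps : R) (heps : 0 < eps) :
  (exists k1 k2 k3 k4 : nat, uniq [:: k1; k2; k3; k4] /\
     [/\ Seps_set alpha a b eps k1, Seps_set alpha a b eps k2,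
         Seps_set alpha a b eps k3 & Seps_set alpha a b eps k4]) ->
  eps / 2 < J_of alpha a b /\ eps / (2 * Num.sqrt 2) < L_of alpha a b.
Proof.
move=> [k1 [k2 [k3 [k4 [hu [s1 s2 s3 s4]]]]]].
have [x1 [x2 [x3 [x4 [h12 h23 h34 [p1 p2 p3 p4]]]]]] :=
  @four_sorted (Seps_set alpha a b eps) _ _ _ _ hu s1 s2 s3 s4.
have [a1 b1 m1] := @block_facts R alpha a b eps x1 heps p1.
have [a2 b2 m2] := @block_facts R alpha a b eps x2 heps p2.
have [a3 b3 m3] := @block_facts R alpha a b eps x3 heps p3.
have [a4 b4 m4] := @block_facts R alpha a b eps x4 heps p4.
have q12 := pow_lt _ _ h12; have q23 := pow_lt _ _ h23; have q34 := pow_lt _ _ h34.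
have e1 : (2 ^ x1.+1 = 2 * 2 ^ x1)%N by rewrite expnS.
have e2 : (2 ^ x2.+1 = 2 * 2 ^ x2)%N by rewrite expnS.
have e3 : (2 ^ x3.+1 = 2 * 2 ^ x3)%N by rewrite expnS.
have e4 : (2 ^ x4.+1 = 2 * 2 ^ x4)%N by rewrite expnS.
have g1 : (0 < 2 ^ x1)%N by rewrite expn_gt0.
split.
  rewrite /J_of.
  have [c0 [hc0 hmin]] := @argmin_nat R
    (fun c => Num.max (A_of alpha a c) (B_of alpha b c)) a b hab.
  apply: (@lt_le_trans _ _ (Num.max (A_of alpha a c0) (B_of alpha b c0))); last first.
    apply: lb_le_inf.
      exists (Num.max (A_of alpha a a) (B_of alpha b a)); exists a => //.
      by rewrite /Iset_nat /= leqnn hab.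
    by move=> x [c hc <-]; apply: hmin.
  rewrite lt_max; apply/orP.
  case: (ltnP c0 (2 ^ x3)) => hc.
    right; apply: (@J_right R alpha b eps c0 x3 x4) => //.
  left; apply: (@J_left R alpha a eps c0 x1 x2) => //; lia.
rewrite /L_of.
set mu := mu_of alpha a b.
have hm0 : forall k, 0 <= mblk R alpha k.
  by move=> k; apply: sumr_ge0 => i _; apply: nrm2_ge0.
have hmu1 : mblk R alpha x1 <= mu.
  apply: (@sum_sub R (fun i => nrm2 (alpha i))); [by move=> i; apply: nrm2_ge0 | by [] | lia].
have hmpos : 0 < mblk R alpha x1.
  have hN : (0 : R) <= (2 ^ x1.+1)%:R by rewrite ler0n.
  have : 0 < eps ^+ 2 by rewrite exprn_gt0.
  move=> he; exact: (real_mpos he m1 hN (hm0 x1)).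
have hmu : 0 < mu by apply: lt_le_trans hmpos hmu1.
rewrite ifF; last by rewrite gt_eqF.
set EL := [set l_of alpha a b f / mu | f in _].
have hsup : forall p q, (a <= p)%N -> (p < q)%N -> (q <= b)%N ->
   (q - p)%:R * (\sum_(a <= k < p.+1) nrm2 (alpha k)) *
     (\sum_(q <= n < b.+1) nrm2 (alpha n)) / mu <= sup EL.
  move=> p q hap hpq hqb.
  have [hd1 hd2] := @ftest_dom R a b p q hap hpq hqb.
  apply: (@le_trans _ _ (l_of alpha a b (ftest R p q) / mu)).
    by rewrite ler_pM2r ?invr_gt0 //; apply: ftest_l.
  apply: ub_le_sup; last by exists (ftest R p q).
  exists (2 ^+ b.+1 * mu * mu / mu).
  move=> x [f [hf1 hf2] <-].
  by rewrite ler_pM2r ?invr_gt0 //; apply: l_ub.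
have [t [ht hL hR]] := @median_nat R (fun i => nrm2 (alpha i)) (fun i => nrm2_ge0 _ _) a b hab.
rewrite -/mu in hL hR.
apply: lt_sqrt.
  by rewrite divr_ge0 ?ltW // mulr_ge0 ?sqrtr_ge0.
have hs2 : Num.sqrt 2 ^+ 2 = 2 :> R by rewrite sqr_sqrtr.
have hs2' : 0 < Num.sqrt 2 :> R by rewrite sqrtr_gt0.
have -> : (eps / (2 * Num.sqrt 2)) ^+ 2 = eps ^+ 2 / 8.
  by rewrite expr_div_n exprMn hs2; field.
have he2 : 0 < eps ^+ 2 by rewrite exprn_gt0.
case: (ltnP t (2 ^ x3)) => htc.
  have hq1 : (a <= t)%N by case/andP: ht.
  have hq2 : (t < 2 ^ x4)%N by clear -htc q34 e3; lia.
  have hq3 : (2 ^ x4 <= b)%N by clear -b4 e4; lia.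
  apply: lt_le_trans (hsup _ _ hq1 hq2 hq3).
  rewrite ltr_pdivlMr //.
  set L := ((2 ^ x4 - t)%:R : R).
  set muL := \sum_(a <= k < t.+1) nrm2 (alpha k).
  set muR := \sum_(2 ^ x4 <= n < b.+1) nrm2 (alpha n).
  set N := ((2 ^ x4)%:R : R).
  have hL0 : 0 <= L by rewrite ler0n.
  have hmuL : 0 <= muL by apply: sumr_ge0 => i _; apply: nrm2_ge0.
  have hmR : mblk R alpha x4 <= muR.
    apply: (@sum_sub R (fun i => nrm2 (alpha i))); [by move=> i; apply: nrm2_ge0 | by [] | exact: b4].
  have hNL : N <= 2 * L by rewrite /N /L -natrM ler_nat; clear -htc q34 e3; lia.
  have hN : ((2 ^ x4.+1)%:R : R) = 2 * N by rewrite e4 natrM.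
  rewrite hN in m4.
  exact: (real_right hmu hL hmuL (hm0 x4) hmR hNL hL0 m4).
have hq1 : (a <= 2 ^ x1.+1 - 1)%N by clear -a1 e1 g1; lia.
have hq2 : (2 ^ x1.+1 - 1 < t)%N by clear -htc q12 q23 e2 g1; lia.
have hq3 : (t <= b)%N by case/andP: ht.
apply: lt_le_trans (hsup _ _ hq1 hq2 hq3).
rewrite ltr_pdivlMr //.
set L := ((t - (2 ^ x1.+1 - 1))%:R : R).
set muL := \sum_(a <= k < (2 ^ x1.+1 - 1).+1) nrm2 (alpha k).
set muR := \sum_(t <= n < b.+1) nrm2 (alpha n).
set N := ((2 ^ x1.+1)%:R : R).
have hN0 : 0 <= N by rewrite ler0n.
have hNL : N <= L by rewrite /N /L ler_nat; clear -htc q12 q23 e2 g1 e1; lia.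
have hmL : mblk R alpha x1 <= muL.
  apply: (@sum_sub R (fun i => nrm2 (alpha i))); [by move=> i; apply: nrm2_ge0 | by [] | clear -g1 e1; lia].
have hmuR : 0 <= muR by apply: sumr_ge0 => i _; apply: nrm2_ge0.
exact: (real_left hmu hR hmuR hN0 hNL (hm0 x1) hmL m1 he2).
Qed.
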